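(* Let $n,k\in\mathbb{N}$. A class of finite graphs all of which have $n$-depth tree-width at most $k$ is $\mathrm{MSO}_2$-orderable if, and only if, it is finite (up to isomorphism). Consequently, the class of all finite graphs of $n$-depth tree-width at most $k$ is hereditarily $\mathrm{MSO}_2$-unorderable.
   Context: Graphs are finite, simple, undirected. A graph has $n$-depth tree-width at most $k$ if it has a tree decomposition of width at most $k$ (all bags of size at most $k+1$) whose index tree is rooted and has height at most $n$. For $G=\langle V,E\rangle$, $\lceil G\rceil=\langle V\cup E,\mathrm{inc}\rangle$ (universe $V\cup E$, incidence relation). An MSO-formula $\varphi(x,y;Z_0,\dots,Z_{m-1})$ defines an order on a class $\mathcal{C}$ of structures if for every non-empty $\mathfrak{A}\in\mathcal{C}$ there are $P_0,\dots,P_{m-1}\subseteq A$ with $\{(a,b):\mathfrak{A}\models\varphi(a,b;\bar P)\}$ a linear order on $A$; a graph class is $\mathrm{MSO}_2$-orderable if some MSO-formula defines an order on $\{\lceil G\rceil\}$. A class is hereditarily $\mathrm{MSO}_2$-unorderable if it is infinite (up to isomorphism) and no infinite subclass is $\mathrm{MSO}_2$-orderable. *)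

(* Defs.v *)
From mathcomp Require Import all_boot.
Set Implicit Arguments. Unset Strict Implicit. Unset Printing Implicit Defensive.

Record graph := Graph {
  gn : nat;
  gadj : rel 'I_gn;
  gadj_irr : irreflexive gadj;
  gadj_sym : symmetric gadj }.

Definition graph_iso (G H : graph) : Prop :=
  exists f : 'I_(gn G) -> 'I_(gn H),
    bijective f /\ forall u v, @gadj H (f u) (f v) = @gadj G u v.

Definition finite_up_to_iso (C : graph -> Prop) : Prop :=
  exists (N : nat) (L : 'I_N -> graph), forall G, C G -> exists i, graph_iso G (L i).

(* A rooted tree on nodes 'I_m with root r is given by a parent map [par]
   with [par r = r]; the requirement that every node reaches the root in
   d parent steps ([iter d par t = r]) says it is a tree of height <= d. *)
Definition tree_adj m (par : 'I_m -> 'I_m) : rel 'I_m :=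
  fun a b => (a != b) && ((par a == b) || (par b == a)).

Definition depth_tw_le (d k : nat) (G : graph) : Prop :=
  exists (m : nat) (par : 'I_m -> 'I_m) (r : 'I_m) (B : 'I_m -> {set 'I_(gn G)}),
    [/\ par r = r,
        (forall t, iter d par t = r),
        (forall v, exists t, v \in B t) &
      [/\ (forall u v, @gadj G u v -> exists t, (u \in B t) && (v \in B t)),
        (forall v t1 t2, v \in B t1 -> v \in B t2 ->
           connect [rel a b | [&& tree_adj par a b, v \in B a & v \in B b]] t1 t2)
      & (forall t, #|B t| <= k.+1)]].

(** * The incidence structure [G] = <V u E, inc> *)
Definition is_edge (G : graph) (s : {set 'I_(gn G)}) : bool :=
  [exists u, exists v, @gadj G u v && (s == [set u; v])].

Definition inc_univ (G : graph) : finType :=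
  ('I_(gn G) + {s : {set 'I_(gn G)} | @is_edge G s})%type.

Definition inc_rel (G : graph) : rel (inc_univ G) :=
  fun a b => match a, b with
             | inl v, inr s => v \in val s
             | _, _ => false
             end.

Inductive mso : Type :=
| MEq  of nat & nat
| MRel of nat & nat
| MIn  of nat & nat
| MNot of mso
| MAnd of mso & mso
| MEx1 of nat & mso
| MEx2 of nat & mso.

Definition upd (T : Type) (e : nat -> T) (i : nat) (a : T) : nat -> T :=
  fun j => if j == i then a else e j.

Fixpoint holds (A : finType) (R : rel A) (e1 : nat -> A) (e2 : nat -> {set A})
    (f : mso) : Prop :=
  match f with
  | MEq x y => e1 x = e1 y
  | MRel x y => R (e1 x) (e1 y)
  | MIn x X => e1 x \in e2 X
  | MNot g => ~ holds R e1 e2 g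
  | MAnd g h => holds R e1 e2 g /\ holds R e1 e2 h
  | MEx1 x g => exists a, holds R (upd e1 x a) e2 g
  | MEx2 X g => exists S, holds R e1 (upd e2 X S) g
  end.

Definition env_xy (A : Type) (a b : A) : nat -> A :=
  fun i => if i == 0 then a else b.

Definition linear_order (A : Type) (R : A -> A -> Prop) : Prop :=
  [/\ (forall a, R a a),
      (forall a b, R a b -> R b a -> a = b),
      (forall a b c, R a b -> R b c -> R a c)
    & (forall a b, R a b \/ R b a)].

Definition mso_defines_order (phi : mso) (C : graph -> Prop) : Prop :=
  forall G, C G -> 0 < #|{: inc_univ G}| ->
    exists P : nat -> {set inc_univ G},
      linear_order (fun a b => holds (@inc_rel G) (env_xy a b) P phi).

Definition mso2_orderable (C : graph -> Prop) : Prop :=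
  exists phi : mso, mso_defines_order phi C.

Definition hered_mso2_unorderable (C : graph -> Prop) : Prop :=
  ~ finite_up_to_iso C /\
  forall D : graph -> Prop, (forall G, D G -> C G) ->
    ~ finite_up_to_iso D -> ~ mso2_orderable D.

(* Main.v *)
Require Import Defs.
From Stdlib Require Import FunctionalExtensionality Setoid Classical.
From mathcomp Require Import all_boot.
Set Implicit Arguments. Unset Strict Implicit. Unset Printing Implicit Defensive.

Fixpoint bnd (f : mso) : nat :=
  match f with
  | MIn _ X => X.+1
  | MNot g => bnd g
  | MAnd g h => maxn (bnd g) (bnd h)
  | MEx1 _ g => bnd g
  | MEx2 X g => maxn X.+1 (bnd g)
  | _ => 0
  end.

Lemma holds_aut (A : finType) (R : rel A) (s : A -> A) :
  bijective s -> (forall a b, R (s a) (s b) = R a b) ->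
  forall f (e1 : nat -> A) (e2 e2' : nat -> {set A}), (forall X, X < bnd f -> forall a, (s a \in e2' X) = (a \in e2 X)) ->
  holds R e1 e2 f <-> holds R (s \o e1) e2' f.
Proof.
move=> [si sK siK] hR; elim=> [x y|x y|x X|g IH|g IHg h IHh|x g IH|X g IH] e1 e2 e2' he /=.
- split=> [->//|]; exact: (can_inj sK).
- by rewrite hR.
- by rewrite he.
- by rewrite (IH e1 e2 e2').
- rewrite (IHg e1 e2 e2') ?(IHh e1 e2 e2') // => Y hY; apply: he;
    apply: (leq_trans hY); by rewrite ?leq_maxl ?leq_maxr.
- have E : forall a, s \o upd e1 x a = upd (s \o e1) x (s a).
    by move=> a; apply: functional_extensionality => j; rewrite /upd /=; case: (j == x).
  split=> [[a Ha]|[b Hb]].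
    by exists (s a); rewrite -E -(IH _ e2 e2').
  exists (si b); rewrite (IH _ e2 e2') // E siK //.
- split=> [[S HS]|[S HS]].
    exists [set b | si b \in S]; rewrite -(IH _ (upd e2 X S)) // => Y hY a.
    rewrite /upd; case: (Y == X); first by rewrite inE sK.
    by apply: he; apply: (leq_trans hY); rewrite leq_maxr.
  exists [set b | s b \in S]; rewrite (IH _ _ (upd e2' X S)) // => Y hY a.
  rewrite /upd; case: (Y == X); first by rewrite inE.
  by apply: he; apply: (leq_trans hY); rewrite leq_maxr.
Qed.

Section Swap.
Variables (V : finType) (K : Type) (adj : rel V) (adj_sym : symmetric adj)
  (cv : V -> K) (ce : {set V} -> K) (x0 : V).

Definition swap (e1 e2 : seq V) v :=
  if v \in e1 then nth x0 e2 (index v e1)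
  else if v \in e2 then nth x0 e1 (index v e2) else v.

Definition QQ u v u' v' :=
  adj u' v' = adj u v /\ (adj u v -> ce [set u'; v'] = ce [set u; v]).

Lemma QQsym u v u' v' : QQ u v u' v' -> QQ v u v' u'.
Proof. by rewrite /QQ (adj_sym v u) (adj_sym v' u') (setUC [set v]) (setUC [set v']). Qed.

Record gpair (e1 e2 a : seq V) : Prop := GPair {
  gp_u1 : uniq e1; gp_u2 : uniq e2; gp_sz : size e1 = size e2;
  gp_hd : forall x, x \in e1 -> x \notin e2;
  gp_hx : forall u v, u \in e1 -> v \in e2 -> ~~ adj u v;
  gp_h1 : forall u w, u \in e1 -> w \notin e1 -> adj u w -> w \in a;
  gp_h2 : forall u w, u \in e2 -> w \notin e2 -> adj u w -> w \in a;
  gp_hc : forall i j, i < size e1 -> j < size e1 ->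
          adj (nth x0 e1 i) (nth x0 e1 j) = adj (nth x0 e2 i) (nth x0 e2 j) /\
          ce [set nth x0 e1 i; nth x0 e1 j] = ce [set nth x0 e2 i; nth x0 e2 j];
  gp_hv : forall i, i < size e1 -> cv (nth x0 e1 i) = cv (nth x0 e2 i);
  gp_ha : forall i j, i < size e1 -> j < size a ->
          adj (nth x0 e1 i) (nth x0 a j) = adj (nth x0 e2 i) (nth x0 a j) /\
          ce [set nth x0 e1 i; nth x0 a j] = ce [set nth x0 e2 i; nth x0 a j] }.

Lemma gpair_sym e1 e2 a : gpair e1 e2 a -> gpair e2 e1 a.
Proof.
case=> u1 u2 sz hd hx h1 h2 hc hv ha; split=> //.
- by move=> x x2; apply/negP => /hd; rewrite x2.
- by move=> u v u2' v1; rewrite adj_sym; apply: hx.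
- by move=> i j; rewrite -sz => hi hj; case: (hc i j hi hj) => -> ->.
- by move=> i; rewrite -sz => hi; rewrite hv.
- by move=> i j; rewrite -sz => hi hj; case: (ha i j hi hj) => -> ->.
Qed.

Lemma swapC e1 e2 : (forall x, x \in e1 -> x \notin e2) -> swap e1 e2 =1 swap e2 e1.
Proof.
move=> hd v; rewrite /swap; case: ifP => h1; case: ifP => h2 //.
by move: (hd _ h1); rewrite h2.
Qed.

Lemma swap_out e1 e2 v : v \notin e1 -> v \notin e2 -> swap e1 e2 v = v.
Proof. by rewrite /swap => /negbTE -> /negbTE ->. Qed.

Lemma swap_in1 e1 e2 i : uniq e1 -> i < size e1 -> swap e1 e2 (nth x0 e1 i) = nth x0 e2 i.
Proof. by move=> u hi; rewrite /swap mem_nth // index_uniq. Qed.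

Lemma out_case e1 e2 a i w : gpair e1 e2 a -> i < size e1 -> w \notin e1 -> w \notin e2 ->
  QQ (nth x0 e1 i) w (nth x0 e2 i) w.
Proof.
case=> u1 u2 sz hd hx h1 h2 hc hv ha hi w1 w2.
have hi2 : i < size e2 by rewrite -sz.
case wa: (w \in a).
  have hj : index w a < size a by rewrite index_mem.
  have [E1 E2] := ha i (index w a) hi hj.
  move: E1 E2; rewrite !nth_index // => E1 E2.
  by rewrite /QQ E1 E2.
have n1 : adj (nth x0 e1 i) w = false.
  by apply/negP => hh; move: (h1 _ _ (mem_nth _ hi) w1 hh); rewrite wa.
have n2 : adj (nth x0 e2 i) w = false.
  by apply/negP => hh; move: (h2 _ _ (mem_nth _ hi2) w2 hh); rewrite wa.
by rewrite /QQ n1 n2.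
Qed.

Lemma half e1 e2 a u v : gpair e1 e2 a -> u \in e1 -> QQ u v (swap e1 e2 u) (swap e1 e2 v).
Proof.
move=> gp; have := gp; case=> u1 u2 sz hd hx h1 h2 hc hv ha ue1.
have hi : index u e1 < size e1 by rewrite index_mem.
rewrite -(nth_index x0 ue1) swap_in1 //.
case ve1 : (v \in e1).
  have hj : index v e1 < size e1 by rewrite index_mem.
  rewrite -(nth_index x0 ve1) swap_in1 //.
  by rewrite /QQ; case: (hc _ _ hi hj) => -> ->.
case ve2 : (v \in e2).
  have sv : swap e2 e1 v = nth x0 e1 (index v e2).
    by rewrite -{1}(nth_index x0 ve2) swap_in1 ?index_mem.
  rewrite swapC // sv.
  have hj : index v e2 < size e2 by rewrite index_mem.
  have a1 : adj (nth x0 e1 (index u e1)) v = false.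
    by apply/negbTE/hx; rewrite ?mem_nth.
  have a2 : adj (nth x0 e2 (index u e1)) (nth x0 e1 (index v e2)) = false.
    rewrite adj_sym; apply/negbTE/hx; apply: mem_nth; by rewrite ?sz // -sz.
  by rewrite /QQ a1 a2.
rewrite swap_out ?ve1 ?ve2 //.
by apply: (out_case gp); rewrite ?ve1 ?ve2.
Qed.

Lemma swap_QQ e1 e2 a u v : gpair e1 e2 a -> QQ u v (swap e1 e2 u) (swap e1 e2 v).
Proof.
move=> gp; have := gp; case=> u1 u2 sz hd hx _ _ _ _ _.
have gp' := gpair_sym gp.
have hd' : forall x, x \in e2 -> x \notin e1.
  by move=> x x2; apply/negP => /hd; rewrite x2.
case ue1 : (u \in e1); first exact: (half v gp ue1).
case ue2 : (u \in e2); first by rewrite !(swapC hd); exact: (half v gp' ue2).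
case ve1 : (v \in e1); first by apply: QQsym; exact: (half u gp ve1).
case ve2 : (v \in e2); first by rewrite !(swapC hd); apply: QQsym; exact: (half u gp' ve2).
by rewrite !swap_out ?ue1 ?ue2 ?ve1 ?ve2.
Qed.

Lemma swap_cv e1 e2 a v : gpair e1 e2 a -> cv (swap e1 e2 v) = cv v.
Proof.
move=> gp; have := gp; case=> u1 u2 sz hd hx _ _ _ hv _.
have hd' : forall x, x \in e2 -> x \notin e1.
  by move=> x x2; apply/negP => /hd; rewrite x2.
case ve1 : (v \in e1).
  by rewrite -(nth_index x0 ve1) swap_in1 ?index_mem // hv ?index_mem.
case ve2 : (v \in e2).
  rewrite swapC // -(nth_index x0 ve2) swap_in1 ?index_mem // hv //.
  by rewrite sz index_mem.
by rewrite swap_out ?ve1 ?ve2.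
Qed.

Lemma swap_inv e1 e2 a v : gpair e1 e2 a -> swap e1 e2 (swap e1 e2 v) = v.
Proof.
move=> gp; have := gp; case=> u1 u2 sz hd hx _ _ _ _ _.
have hd' : forall x, x \in e2 -> x \notin e1.
  by move=> x x2; apply/negP => /hd; rewrite x2.
case ve1 : (v \in e1).
  rewrite -(nth_index x0 ve1) swap_in1 ?index_mem // swapC // swap_in1 //.
  by rewrite -sz index_mem.
case ve2 : (v \in e2).
  have sv : swap e1 e2 v = nth x0 e1 (index v e2).
    by rewrite (swapC hd) -{1}(nth_index x0 ve2) swap_in1 ?index_mem.
  rewrite sv swap_in1 ?nth_index //.
  by rewrite sz index_mem.
by rewrite !swap_out ?ve1 ?ve2.
Qed.

End Swap.

Fixpoint Good (V : finType) (adj : rel V) (k : nat) (d : nat) (X : {set V}) : Prop :=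
  match d with
  | 0 => X = set0
  | d'.+1 => exists (R : {set V}) (P : {set {set V}}),
     [/\ #|R| <= k.+1,
         X \subset R :|: cover P,
         (forall Y, Y \in P -> Y \subset X :\: R),
         (forall Y Z, Y \in P -> Z \in P -> Y != Z ->
            forall u v, u \in Y -> v \in Z -> (u != v) && ~~ adj u v)
       & (forall Y, Y \in P -> Good adj k d' Y)]
  end.

Definition aut_ok (V : finType) (K : Type) (adj : rel V) (cv : V -> K) (ce : {set V} -> K)
  (pi : V -> V) : Prop :=
  [/\ involutive pi, exists x, pi x != x, (forall u v, adj (pi u) (pi v) = adj u v),
      (forall u v, adj u v -> ce [set pi u; pi v] = ce [set u; v])
    & (forall v, cv (pi v) = cv v)].

Lemma core (K : finType) k d : forall a, exists M, forall (V : finType) (adj : rel V),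
  symmetric adj -> forall (cv : V -> K) (ce : {set V} -> K) (A X : {set V}),
  #|A| <= a -> (forall u w, u \in X -> w \notin X -> adj u w -> w \in A) ->
  Good adj k d X -> M < #|X| -> exists pi, aut_ok adj cv ce pi.
Proof.
elim: d => [|d IH] a.
  by exists 0 => V adj _ cv ce A X _ _ /= -> ; rewrite cards0.
have [Md HMd] := IH (a + k.+1).
pose CT := ('I_Md.+1 * {ffun 'I_Md * 'I_Md -> bool * K} * {ffun 'I_Md -> K}
            * {ffun 'I_Md * 'I_(a + k.+1) -> bool * K})%type.
exists (k.+1 + #|{: CT}| * Md) => V adj adj_sym cv ce A X hA hanc [R [P [hR hcov hsub hdis hgood]]] hX.
have hanc' : forall Y, Y \in P -> forall u w, u \in Y -> w \notin Y -> adj u w -> w \in A :|: R.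
  move=> Y YP u w uY wY uw; rewrite inE.
  have uX : u \in X by move: (subsetP (hsub _ YP) _ uY); rewrite inE => /andP[].
  case wX : (w \in X); last by rewrite (hanc u w) // wX.
  case wR : (w \in R); first by rewrite orbT.
  have : w \in R :|: cover P by apply: (subsetP hcov).
  rewrite inE wR /= => /bigcupP [Z ZP wZ].
  have YZ : Y != Z by apply/negP => /eqP E; move: wY; rewrite E wZ.
  by move: (hdis _ _ YP ZP YZ u w uY wZ); rewrite uw andbF.
have hA' : #|A :|: R| <= a + k.+1.
  by apply: (leq_trans (leq_card_setU _ _)); apply: leq_add.
case: (boolP [exists Y in P, Md < #|Y|]).
  case/existsP => Y /andP [YP hY].
  apply: (HMd V adj adj_sym cv ce (A :|: R) Y hA' (hanc' Y YP) (hgood Y YP) hY).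
rewrite negb_exists => /forallP hsmall.
have hsm : forall Y, Y \in P -> #|Y| <= Md.
  by move=> Y YP; move: (hsmall Y); rewrite YP /= -leqNgt.
have [x0 _] : exists x0, x0 \in X.
  by apply/set0Pn; rewrite -card_gt0; apply: leq_ltn_trans hX.
pose al := enum (A :|: R).
pose code (Y : {set V}) : CT :=
  (inord #|Y|,
   [ffun ij : 'I_Md * 'I_Md => (adj (nth x0 (enum Y) ij.1) (nth x0 (enum Y) ij.2),
                                 ce [set nth x0 (enum Y) ij.1; nth x0 (enum Y) ij.2])],
   [ffun i : 'I_Md => cv (nth x0 (enum Y) i)],
   [ffun ij : 'I_Md * 'I_(a + k.+1) => (adj (nth x0 (enum Y) ij.1) (nth x0 al ij.2),
                                 ce [set nth x0 (enum Y) ij.1; nth x0 al ij.2])]).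
have : [exists Y1 in P, exists Y2 in P, (code Y1 == code Y2) && (Y1 != Y2)].
  apply: contraT => /negP H.
  have inj : {in P &, injective code}.
    move=> Y1 Y2 h1 h2 e; apply/eqP/negPn/negP => ne; apply: H.
    apply/existsP; exists Y1; rewrite h1 /=; apply/existsP; exists Y2.
    by rewrite h2 e eqxx.
  have hP := @leq_card_in _ _ code P inj.
  have : #|X| <= k.+1 + #|{: CT}| * Md.
    apply: (leq_trans (subset_leq_card hcov)).
    apply: (leq_trans (leq_card_setU _ _)); apply: leq_add => //.
    apply: (leq_trans (leq_card_cover P)).
    apply: (@leq_trans (\sum_(Y in P) Md)); first exact: leq_sum.
    by rewrite sum_nat_const leq_mul2r hP orbT.
  by rewrite leqNgt hX.
case/existsP => Y1 /andP [Y1P /existsP [Y2 /and3P [Y2P /eqP ec ne]]].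
have s1 := hsm _ Y1P; have s2 := hsm _ Y2P.
have esz : #|Y1| = #|Y2|.
  have := congr1 (fun c : CT => val c.1.1.1) ec; rewrite /= !inordK //.
have hdY := hdis _ _ Y1P Y2P ne.
have gp : gpair adj cv ce x0 (enum Y1) (enum Y2) al.
  split.
  - exact: enum_uniq.
  - exact: enum_uniq.
  - by rewrite -!cardE.
  - move=> x; rewrite !mem_enum => x1; apply/negP => x2.
    by move: (hdY x x x1 x2); rewrite eqxx.
  - move=> u v; rewrite !mem_enum => u1 v2.
    by case/andP: (hdY u v u1 v2).
  - move=> u w; rewrite !mem_enum => u1 w1 uw.
    exact: (hanc' _ Y1P u w u1 w1 uw).
  - move=> u w; rewrite !mem_enum => u1 w1 uw.
    exact: (hanc' _ Y2P u w u1 w1 uw).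
  - move=> i j; rewrite -cardE => hi hj.
    have hi' : i < Md by apply: leq_trans s1.
    have hj' : j < Md by apply: leq_trans s1.
    have := congr1 (fun c : CT => c.1.1.2 (Ordinal hi', Ordinal hj')) ec.
    by rewrite /= !ffunE /= => -[-> ->].
  - move=> i; rewrite -cardE => hi.
    have hi' : i < Md by apply: leq_trans s1.
    have := congr1 (fun c : CT => c.1.2 (Ordinal hi')) ec.
    by rewrite /= !ffunE /=.
  - move=> i j; rewrite -cardE => hi hj.
    have hi' : i < Md by apply: leq_trans s1.
    have hj' : j < a + k.+1 by apply: leq_trans hA'; rewrite cardE.
    have := congr1 (fun c : CT => c.2 (Ordinal hi', Ordinal hj')) ec.
    by rewrite /= !ffunE /= => -[-> ->].
exists (swap x0 (enum Y1) (enum Y2)); split.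
- by move=> v; apply: swap_inv gp.
- have hpos : 0 < #|Y1|.
    case: (posnP #|Y1|) => [e0|//].
    have e2 : #|Y2| = 0 by rewrite -esz.
    by move: ne; rewrite (cards0_eq e0) (cards0_eq e2) eqxx.
  exists (nth x0 (enum Y1) 0); rewrite swap_in1 ?enum_uniq -?cardE //.
  apply/negP => /eqP e.
  have m1 : nth x0 (enum Y1) 0 \in Y1 by rewrite -mem_enum mem_nth // -cardE.
  have m2 : nth x0 (enum Y2) 0 \in Y2 by rewrite -mem_enum mem_nth // -cardE -esz.
  by move: (hdY _ _ m1 m2); rewrite e eqxx.
- by move=> u v; case: (swap_QQ adj_sym u v gp).
- by move=> u v; case: (swap_QQ adj_sym u v gp).
- by move=> v; apply: swap_cv gp.
Qed.

Section Tree.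
Variables (V : finType) (adj : rel V) (k d m : nat) (par : 'I_m -> 'I_m) (r : 'I_m)
  (B : 'I_m -> {set V}).
Hypotheses (hr : par r = r) (hit : forall t, iter d par t = r)
  (hcov : forall v, exists t, v \in B t)
  (hedge : forall u v, adj u v -> exists t, (u \in B t) && (v \in B t))
  (hconn : forall v t1 t2, v \in B t1 -> v \in B t2 ->
           connect [rel a b | [&& tree_adj par a b, v \in B a & v \in B b]] t1 t2)
  (hsize : forall t, #|B t| <= k.+1).

Lemma iter_r i : iter i par r = r.
Proof. by elim: i => // i IH; rewrite iterS IH hr. Qed.

Definition descb t s := [exists i : 'I_d.+1, iter i par s == t].

Lemma descP t s : reflect (exists i, iter i par s = t) (descb t s).
Proof.
apply: (iffP existsP) => [[i /eqP e]|[i e]]; first by exists i.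
case: (leqP i d) => hi.
  by exists (Ordinal (hi : i < d.+1)); rewrite /= e.
exists ord_max; rewrite /= hit.
have : i = (i - d) + d by rewrite subnK // ltnW.
by move=> E; move: e; rewrite E iterD hit iter_r => ->.
Qed.

Lemma cyc i x : iter i.+1 par x = x -> x = r.
Proof.
move=> e.
have loop : forall q, iter (i.+1 * q) par x = x.
  by elim=> [|q IH]; rewrite ?muln0 // mulnSr iterD e IH.
by rewrite -(loop d) mulSnr iterD hit iter_r.
Qed.

Lemma child_unique_aux t c c' i j s : par c = t -> par c' = t -> c' != t ->
  iter i par s = c -> iter j par s = c' -> i <= j -> c = c'.
Proof.
move=> pc pc' nc' ei ej le.
have E : iter (j - i) par c = c' by rewrite -ei -iterD subnK.
move: E; case: (j - i) => [//|q] E.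
rewrite iterSr pc in E.
have et : iter q.+1 par t = t by rewrite iterS E pc'.
have tr := cyc et.
move: E; rewrite tr iter_r => E.
by move: nc'; rewrite -E tr eqxx.
Qed.

Lemma child_unique t c c' i j s : par c = t -> c != t -> par c' = t -> c' != t ->
  iter i par s = c -> iter j par s = c' -> c = c'.
Proof.
move=> pc nc pc' nc' ei ej; case: (leqP i j) => h.
  exact: (child_unique_aux pc pc' nc' ei ej h).
by apply/esym; apply: (child_unique_aux pc' pc nc ej ei (ltnW h)).
Qed.

Lemma top_ex v : exists t, (v \in B t) && ((t == r) || (v \notin B (par t))).
Proof.
have [t0 h0] := hcov v.
suff: forall j t, v \in B t -> iter j par t = r ->
        exists t, (v \in B t) && ((t == r) || (v \notin B (par t))).
  by move=> H; apply: (H d t0 h0 (hit t0)).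
elim=> [|j IH] t vt e.
  by exists t; rewrite vt /=; move: e => /= ->; rewrite eqxx.
case vp : (v \in B (par t)).
  by apply: (IH (par t) vp); rewrite -iterSr.
by exists t; rewrite vt vp orbT.
Qed.

Definition top v := odflt r [pick t | (v \in B t) && ((t == r) || (v \notin B (par t)))].

Lemma top_spec v : v \in B (top v) /\ (top v = r \/ v \notin B (par (top v))).
Proof.
rewrite /top; case: pickP => [t /andP [vt h]|none] /=.
  by split=> //; case/orP: h => [/eqP ->|->]; [left|right].
by have [t ht] := top_ex v; move: (none t); rewrite ht.
Qed.

Lemma top_anc v s : v \in B s -> exists i, iter i par s = top v.
Proof.
move=> vs; have [vt htop] := top_spec v.
have := hconn vt vs; case/connectP => p0 pth0 ->.
suff H : forall p x, (exists i, iter i par x = top v) ->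
  path [rel a b | [&& tree_adj par a b, v \in B a & v \in B b]] x p ->
  exists i, iter i par (last x p) = top v.
  by apply: H pth0; exists 0.
elim=> [|y p IH] x [i hi] //=; first by exists i.
case/andP => /and3P [/andP [_ /orP [/eqP pxy|/eqP pyx]] vx vy] pth; apply: (IH y _ pth).
  case: i hi => [|i] hi.
    move: hi => /= hx; move: vy; rewrite -pxy hx => vy.
    case: htop => [tr|]; last by rewrite vy.
    by exists 0; rewrite /= tr hr.
  by exists i; rewrite -pxy -iterSr.
by exists i.+1; rewrite iterSr pyx.
Qed.

Definition Xs t := [set v | descb t (top v)].
Definition Rs t := [set v | top v == t].
Definition Ps t := [set Xs c | c in [set c | (par c == t) && (c != t)]].

Lemma child_ex t : forall i s, iter i par s = t -> s != t ->
  exists c, [/\ par c = t, c != t & exists j, iter j par s = c].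
Proof.
elim=> [|i IH] s e ns; first by move: ns; rewrite -e /= eqxx.
case ct : (iter i par s == t).
  by apply: IH ns; apply/eqP.
by exists (iter i par s); split; [rewrite -iterS | rewrite ct | exists i].
Qed.

Lemma main_good h : forall t, (forall s, descb t s -> exists i, i < h /\ iter i par s = t) ->
  Good adj k h (Xs t).
Proof.
elim: h => [|h IH] t hyp /=.
  apply/eqP; rewrite -subset0; apply/subsetP => v; rewrite inE => H; by have [i []] := hyp _ H.
exists (Rs t), (Ps t); split.
- apply: leq_trans (hsize t); apply: subset_leq_card; apply/subsetP => v.
  by rewrite inE => /eqP <-; case: (top_spec v).
- apply/subsetP => v; rewrite inE => /descP [i ei].
  case tv : (top v == t); first by rewrite inE inE tv.
  have [c [pc nc [j ej]]] := child_ex ei (negbT tv).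
  rewrite inE; apply/orP; right; apply/bigcupP; exists (Xs c).
    by apply/imsetP; exists c => //; rewrite inE pc eqxx nc.
  by rewrite inE; apply/descP; exists j.
- move=> Y /imsetP [c]; rewrite inE => /andP [/eqP pc nc] ->.
  apply/subsetP => v; rewrite !inE => /descP [i ei].
  apply/andP; split.
    apply/eqP => tv; rewrite tv in ei.
    have : iter i.+1 par t = t by rewrite iterS ei pc.
    move/cyc => tr; move: ei; rewrite tr iter_r => cr.
    by move: nc; rewrite -cr tr eqxx.
  by apply/descP; exists i.+1; rewrite iterS ei pc.
- move=> Y Z /imsetP [c]; rewrite inE => /andP [/eqP pc nc] ->.
  move=> /imsetP [c']; rewrite inE => /andP [/eqP pc' nc'] -> neYZ.
  have ncc : c != c' by apply/negP => /eqP E; move: neYZ; rewrite E eqxx.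
  move=> u v; rewrite !inE => /descP [i ei] /descP [j ej]; apply/andP; split.
    apply/negP => /eqP E; rewrite E in ei.
    by move: ncc; rewrite (child_unique pc nc pc' nc' ei ej) eqxx.
  apply/negP => /hedge [s /andP [us vs]].
  have [i1 e1] := top_anc us; have [j1 f1] := top_anc vs.
  have E1 : iter (i + i1) par s = c by rewrite iterD e1.
  have E2 : iter (j + j1) par s = c' by rewrite iterD f1.
  by move: ncc; rewrite (child_unique pc nc pc' nc' E1 E2) eqxx.
- move=> Y /imsetP [c]; rewrite inE => /andP [/eqP pc nc] ->.
  apply: IH => s /descP [i ei].
  have dts : descb t s by apply/descP; exists i.+1; rewrite iterS ei.
  have [j [hj ej]] := hyp s dts.
  exists i; split => //.
  case: (leqP j i) => hji; last by rewrite ltnS in hj; exact: (leq_trans hji hj).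
  have E : iter (i - j) par t = c by rewrite -ej -iterD subnK.
  have : iter (i - j).+1 par t = t by rewrite iterS E pc.
  move/cyc => tr; move: E; rewrite tr iter_r => cr.
  by move: nc; rewrite -cr tr eqxx.
Qed.

Lemma good_all : Good adj k d.+1 [set: V].
Proof.
have -> : [set: V] = Xs r.
  apply/setP => v; rewrite !inE; apply/esym/descP; exists d; exact: hit.
apply: main_good => s _; exists d; split => //.
Qed.

End Tree.

Lemma depth_good n k (G : graph) : depth_tw_le n k G -> Good (@gadj G) k n.+1 [set: 'I_(gn G)].
Proof.
case=> m [par [r [B [hr hit hcov [hedge hconn hsize]]]]].
exact: (good_all hr hit hcov hedge hconn hsize).
Qed.

Section Glue.
Variables (G : graph) (N : nat) (P : nat -> {set inc_univ G}).

Definition cvP (v : 'I_(gn G)) : {ffun 'I_N -> bool} :=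
  [ffun i : 'I_N => (inl v : inc_univ G) \in P i].
Definition ceP (s : {set 'I_(gn G)}) : {ffun 'I_N -> bool} :=
  if insub s is Some e then [ffun i : 'I_N => (inr e : inc_univ G) \in P i]
  else [ffun => false].

Lemma ceP_val (e : {s : {set 'I_(gn G)} | is_edge s}) :
  ceP (val e) = [ffun i : 'I_N => (inr e : inc_univ G) \in P i].
Proof.
rewrite /ceP; case: insubP => [e' _ ve|np]; last by move: np; rewrite (valP e).
by have -> : e' = e by apply: val_inj.
Qed.

Variable pi : 'I_(gn G) -> 'I_(gn G).
Hypothesis hpi : aut_ok (@gadj G) cvP ceP pi.

Lemma emap_proof (e : {s : {set 'I_(gn G)} | is_edge s}) : is_edge (pi @: val e).
Proof.
case: hpi => _ _ hadj _ _.
case: e => s /= /existsP [u /existsP [v /andP [uv /eqP ->]]].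
apply/existsP; exists (pi u); apply/existsP; exists (pi v).
by rewrite hadj uv imsetU1 imset_set1 eqxx.
Qed.

Definition emap (e : {s : {set 'I_(gn G)} | is_edge s}) : {s : {set 'I_(gn G)} | is_edge s} := exist (fun s => is_edge s) (pi @: val e) (emap_proof e).

Definition sgm (a : inc_univ G) : inc_univ G :=
  match a with inl v => inl (pi v) | inr e => inr (emap e) end.

Lemma sig_inv : involutive sgm.
Proof.
case: hpi => inv _ _ _ _.
case=> [v|e] /=; first by rewrite inv.
congr inr; apply: val_inj => /=.
rewrite -imset_comp (eq_imset (g := id)) ?imset_id //.
Qed.

Lemma sig_rel a b : inc_rel (sgm a) (sgm b) = inc_rel a b.
Proof.
case: hpi => inv _ _ _ _.
case: a => [v|e]; case: b => [w|f] //=.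
by rewrite mem_imset //; apply: (can_inj inv).
Qed.

Lemma sig_col a X : X < N -> (sgm a \in P X) = (a \in P X).
Proof.
case: hpi => _ _ hadj hce hcv hX.
case: a => [v|e] /=.
  by have := congr1 (fun f : {ffun 'I_N -> bool} => f (Ordinal hX)) (hcv v); rewrite !ffunE.
have E : ceP (val (emap e)) = ceP (val e).
  case: e => s /= ps; move: (ps) => /existsP [u /existsP [v /andP [uv /eqP E]]].
  by rewrite E imsetU1 imset_set1 hce.
move: E; rewrite !ceP_val => E.
by have := congr1 (fun f : {ffun 'I_N -> bool} => f (Ordinal hX)) E; rewrite !ffunE.
Qed.

End Glue.

Lemma not_order (G : graph) (phi : mso) (P : nat -> {set inc_univ G}) pi :
  aut_ok (@gadj G) (cvP (bnd phi) P) (ceP (bnd phi) P) pi ->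
  ~ linear_order (fun a b => holds (@inc_rel G) (env_xy a b) P phi).
Proof.
move=> hpi; have := hpi; case=> _ [x hx] _ _ _ [_ anti _ tot].
pose s := sgm hpi.
have key : forall a b, holds (@inc_rel G) (env_xy a b) P phi <->
                       holds (@inc_rel G) (env_xy (s a) (s b)) P phi.
  move=> a b.
  have -> : env_xy (s a) (s b) = s \o env_xy a b.
    by apply: functional_extensionality => i; rewrite /env_xy /=; case: (i == 0).
  apply: holds_aut.
  - exact: inv_bij (sig_inv hpi).
  - exact: sig_rel.
  - by move=> X hX a'; apply: sig_col.
have sa : s (inl x) = inl (pi x) by [].
have sb : s (inl (pi x)) = inl x by rewrite -sa /s (sig_inv hpi (inl x)).
have [h|h] := tot (inl x) (inl (pi x)).
- have h' := proj1 (key _ _) h; rewrite sa sb in h'.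
  by move: (anti _ _ h h') => [] E; move: hx; rewrite -E eqxx.
- have h' := proj1 (key _ _) h; rewrite sa sb in h'.
  by move: (anti _ _ h h') => [] E; move: hx; rewrite E eqxx.
Qed.

Section MkG.
Variable M : nat.
Definition CodeT := ('I_M.+1 * {ffun 'I_M.+1 * 'I_M.+1 -> bool})%type.

Definition mk_adj (x : CodeT) : rel 'I_x.1 :=
  fun u v => (u != v) && (x.2 (inord u, inord v) || x.2 (inord v, inord u)).
Arguments mk_adj x : clear implicits.

Lemma mk_irr (x : CodeT) : irreflexive (mk_adj x).
Proof. by move=> u; rewrite /mk_adj eqxx. Qed.

Lemma mk_sym (x : CodeT) : symmetric (mk_adj x).
Proof. by move=> u v; rewrite /mk_adj eq_sym orbC. Qed.

Definition mkg (x : CodeT) : graph := Graph (@mk_irr x) (@mk_sym x).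
End MkG.

Lemma iso_gn (G H : graph) : graph_iso G H -> gn G = gn H.
Proof. by case=> f [bf _]; rewrite -(card_ord (gn G)) -(card_ord (gn H)); apply: bij_eq_card bf. Qed.

Lemma bounded_finite M (C : graph -> Prop) : (forall G, C G -> gn G <= M) -> finite_up_to_iso C.
Proof.
move=> hb; exists #|{: CodeT M}|, (fun i => mkg (enum_val i)) => G CG.
pose x : CodeT M := (inord (gn G), [ffun ij : 'I_M.+1 * 'I_M.+1 =>
  [exists u : 'I_(gn G), exists v : 'I_(gn G), [&& val u == val ij.1, val v == val ij.2 & gadj u v]]]).
exists (enum_rank x); rewrite enum_rankK.
have hG := hb G CG.
have eq : gn G = gn (mkg x) by rewrite /= inordK.
exists (cast_ord eq); split.
  by exists (cast_ord (esym eq)); [apply: cast_ordK | apply: cast_ordKV].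
move=> u v; rewrite /= /mk_adj /=.
have cv : forall w : 'I_(gn G), val (cast_ord eq w) = val w by [].
have ev : forall (a b : 'I_(gn G)), x.2 (inord (cast_ord eq a), inord (cast_ord eq b)) = gadj a b.
  move=> a b; rewrite ffunE /=.
  have la : val a < M.+1 by rewrite ltnS; apply: ltnW; apply: leq_trans (ltn_ord a) hG.
  have lb : val b < M.+1 by rewrite ltnS; apply: ltnW; apply: leq_trans (ltn_ord b) hG.
  rewrite !inordK //.
  apply/existsP/idP => [[a' /existsP [b' /and3P [/eqP ea /eqP eb h]]]|h].
    by rewrite (val_inj ea) (val_inj eb) in h.
  by exists a; apply/existsP; exists b; rewrite !eqxx h.
rewrite !ev.
have -> : (cast_ord eq u != cast_ord eq v) = (u != v) by rewrite -!val_eqE.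
case: eqP => [->|_] /=; first by rewrite gadj_irr.
by rewrite (@gadj_sym G v u) orbb.
Qed.

Definition phiB (s : seq nat) : mso :=
  foldr (fun i acc => MAnd (MNot (MAnd (MIn 1 i) (MNot (MIn 0 i)))) acc) (MEq 0 0) s.

Lemma holds_phiB (A : finType) (R : rel A) (P : nat -> {set A}) a b s :
  holds R (env_xy a b) P (phiB s) <-> (forall i, i \in s -> b \in P i -> a \in P i).
Proof.
elim: s => [|i s IH] /=; first by split=> // _ i.
rewrite /env_xy /=; split.
  case=> h1 /(proj1 IH) h2 j; rewrite inE => /orP [/eqP ->|js] bj; last exact: h2.
  by case: (boolP (a \in P i)) => // /negP na; exfalso; apply: h1.
move=> h; split.
  by move=> [bi na]; apply: na; apply: h; rewrite ?inE ?eqxx.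
by apply: (proj2 IH) => j js; apply: h; rewrite inE js orbT.
Qed.

Lemma lo_iff (A : Type) (R R' : A -> A -> Prop) :
  (forall a b, R a b <-> R' a b) -> linear_order R' -> linear_order R.
Proof.
move=> h [r1 r2 r3 r4]; split.
- by move=> a; apply/h.
- by move=> a b /h ? /h ?; apply: r2.
- by move=> a b c /h h1 /h h2; apply/h; apply: r3 h1 h2.
- by move=> a b; case: (r4 a b) => ?; [left|right]; apply/h.
Qed.

Lemma card_inc (G : graph) : #|{: inc_univ G}| <= gn G + 2 ^ gn G.
Proof.
rewrite /inc_univ card_sum card_ord leq_add2l.
apply: (leq_trans (leq_card _ val_inj)).
have := card_powerset [set: 'I_(gn G)]; rewrite cardsT card_ord => <-.
rewrite -cardsT; apply: subset_leq_card; apply/subsetP => s _; by rewrite powersetE subsetT.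
Qed.

Lemma finite_orderable C : finite_up_to_iso C -> mso2_orderable C.
Proof.
case=> N [L hL].
pose Bd := \max_(i < N) (gn (L i) + 2 ^ gn (L i)).
exists (phiB (iota 0 Bd)) => G CG _.
have [i iso] := hL G CG.
have hB : #|{: inc_univ G}| <= Bd.
  apply: (leq_trans (card_inc G)); rewrite (iso_gn iso).
  exact: (@leq_bigmax _ (fun j => gn (L j) + 2 ^ gn (L j)) i).
exists (fun i => [set c | enum_rank c <= i]).
apply: (lo_iff (R' := fun a b => enum_rank a <= enum_rank b)).
  move=> a b; rewrite holds_phiB; split.
    move=> h; have := h (enum_rank b); rewrite !inE mem_iota leqnn /=; apply => //.
    by apply: leq_trans hB.
  by move=> h j _; rewrite !inE => hb; apply: leq_trans hb.
split.
- by move=> a.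
- by move=> a b h1 h2; apply: enum_rank_inj; apply: val_inj; apply/eqP; rewrite eqn_leq h1 h2.
- by move=> a b c; apply: leq_trans.
- by move=> a b; case: (leqP (enum_rank a) (enum_rank b)) => h; [left|right; apply: ltnW].
Qed.

Definition Eg m : graph := @Graph m (fun _ _ => false) (fun _ => erefl) (fun _ _ => erefl).

Lemma E_dtw n k m : 0 < n -> depth_tw_le n k (Eg m).
Proof.
case: n => // n _.
exists m.+1, (fun _ => ord_max), ord_max, (fun t => [set v : 'I_m | val v == val t]).
split=> //.

- by move=> v; exists (widen_ord (leqnSn m) v); rewrite inE.
split=> //.
- move=> v t1 t2; rewrite !inE => /eqP e1 /eqP e2.
  have -> : t1 = t2 by apply: val_inj; rewrite -e1 -e2.
  exact: connect0.
- move=> t; case: (set_0Vmem [set v : 'I_m | val v == val t]) => [->|[v0 hv0]].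
    by rewrite cards0.
  apply: (@leq_trans 1) => //; rewrite -(cards1 v0); apply: subset_leq_card.
  apply/subsetP => v; move: hv0; rewrite !inE => /eqP e0 /eqP e.
  by apply/eqP; apply: val_inj; rewrite e e0.
Qed.

Lemma E_not_finite n k : 0 < n -> ~ finite_up_to_iso (depth_tw_le n k).
Proof.
move=> hn [N [L hL]].
pose Bd := \max_(i < N) gn (L i).
have [i iso] := hL _ (E_dtw k Bd.+1 hn).
have := @leq_bigmax _ (fun j => gn (L j)) i.
by rewrite -(iso_gn iso) /= ltnn.
Qed.

Lemma orderable_finite n k C : (forall G, C G -> depth_tw_le n k G) ->
  mso2_orderable C -> finite_up_to_iso C.
Proof.
move=> hC [phi hphi].
have [M HM] := core {ffun 'I_(bnd phi) -> bool} k n.+1 0.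
apply: NNPP => nf.
have [G [CG hG]] : exists G, C G /\ M < gn G.
  apply: NNPP => ne; apply: nf; apply: (@bounded_finite M) => G CG.
  rewrite leqNgt; apply/negP => h; apply: ne; by exists G.
have pos : 0 < #|{: inc_univ G}|.
  by apply/card_gt0P; exists (inl (Ordinal (leq_ltn_trans (leq0n M) hG))).
have [P hP] := hphi G CG pos.
have := HM _ (@gadj G) (@gadj_sym G) (cvP (bnd phi) P) (ceP (bnd phi) P) set0 setT.
case.
- by rewrite cards0.
- by move=> u w _; rewrite inE.
- exact: (depth_good (hC G CG)).
- by rewrite cardsT card_ord.
move=> pi hpi; exact: not_order hpi hP.
Qed.

Theorem proposition4p15 :
  (forall (n k : nat) (C : graph -> Prop),
     (forall G, C G -> depth_tw_le n k G) ->
     (mso2_orderable C <-> finite_up_to_iso C)) /\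
  (forall n k : nat, 0 < n -> hered_mso2_unorderable (depth_tw_le n k)).
Proof.
split.
  move=> n k C hC; split; [exact: orderable_finite hC | exact: finite_orderable].
move=> n k hn; split; first exact: E_not_finite.
move=> D hD nf ord; apply: nf; exact: (orderable_finite hD ord).
Qed.
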